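(* Let $\varphi$ be a smooth skew-morphism of a finite group $A$, of order $n$, with power function $\pi:A\to\mathbb{Z}_n$. Then: (i) $\pi$ takes values in the unit group $\mathbb{Z}_n^*$ and is a group homomorphism $A\to\mathbb{Z}_n^*$ whose kernel is $\mathrm{Ker}\,\varphi$; (ii) for any $\varphi$-invariant normal subgroup $N$ of $A$, the induced skew-morphism $\bar\varphi$ of $A/N$ is smooth, and if $N=\mathrm{Ker}\,\varphi$ then $\bar\varphi$ is the identity permutation; (iii) for every positive integer $k$, $\varphi^k$ is a smooth skew-morphism of $A$; (iv) for every automorphism $\gamma$ of $A$, $\gamma^{-1}\varphi\gamma$ is a smooth skew-morphism of $A$.
   Context: A skew-morphism of a finite group $A$ is a permutation $\varphi$ of the set $A$ with $\varphi(1)=1$ for which there exists a function $\pi:A\to\mathbb{Z}_n$, where $n$ is the order of $\varphi$ as a permutation, such that $\varphi(xy)=\varphi(x)\varphi^{\pi(x)}(y)$ for all $x,y\in A$; $\pi$ is the power function. The kernel is $\mathrm{Ker}\,\varphi=\{x\in A:\pi(x)=1\}$, and the core is $\mathrm{Core}\,\varphi=\bigcap_{i=1}^n\varphi^i(\mathrm{Ker}\,\varphi)$, a $\varphi$-invariant normal subgroup. $\varphi$ is smooth if $\varphi(x)\in x\,\mathrm{Core}\,\varphi$ for all $x\in A$. For a $\varphi$-invariant normal subgroup $N$ (i.e. $\varphi(N)=N$), the induced skew-morphism of $A/N$ is $\bar\varphi(xN)=\varphi(x)N$, with power function $\bar\pi(xN)\equiv\pi(x)\pmod{|\bar\varphi|}$.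 *)

(* Defs.v *)
From HB Require Import structures.
From mathcomp Require Import all_boot all_fingroup.
Set Implicit Arguments. Unset Strict Implicit. Unset Printing Implicit Defensive.
Local Open Scope group_scope.

Section SkewDefs.
Variable gT : finGroupType.

(* pi is a power function for phi: phi(xy) = phi(x) phi^{pi(x)}(y).
   Values of pi are natural numbers read modulo n = #[phi]. *)
Definition skew_power (phi : {perm gT}) (pi : gT -> nat) : Prop :=
  forall x y : gT, phi (x * y) = phi x * (phi ^+ pi x)%g y.

Definition skew_morphism (phi : {perm gT}) : Prop :=
  phi 1 = 1 /\ exists pi, skew_power phi pi.

Definition skew_ker (phi : {perm gT}) (pi : gT -> nat) : {set gT} :=
  [set x | pi x == 1 %[mod #[phi]]].

Definition skew_core (phi : {perm gT}) (pi : gT -> nat) : {set gT} :=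
  \bigcap_(1 <= i < #[phi].+1) ((phi ^+ i)%g @: skew_ker phi pi).

Definition skew_smooth (phi : {perm gT}) (pi : gT -> nat) : Prop :=
  forall x : gT, phi x \in x *: skew_core phi pi.

(* phi is a smooth skew-morphism (smoothness w.r.t. a power function of phi;
   the power function is unique modulo #[phi]) *)
Definition smooth_skew_morphism (phi : {perm gT}) : Prop :=
  phi 1 = 1 /\ exists pi, skew_power phi pi /\ skew_smooth phi pi.

End SkewDefs.

(* Main.v *)
Require Import Defs.
From HB Require Import structures.
From mathcomp Require Import all_boot all_fingroup all_solvable.
Local Open Scope group_scope.
Set Implicit Arguments. Unset Strict Implicit.

Definition sigk (gT : finGroupType) (phi : {perm gT}) (pi : gT -> nat) (x : gT) (k : nat) :=
  (\sum_(i < k) pi ((phi ^+ i) x))%N.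

Lemma skew_iter (gT : finGroupType) (phi : {perm gT}) (pi : gT -> nat) :
  skew_power phi pi -> forall k x y,
  (phi ^+ k) (x * y) = (phi ^+ k) x * (phi ^+ sigk phi pi x k) y.
Proof.
move=> hp; elim=> [|k IH] x y.
  by rewrite /sigk big_ord0 !expg0 !perm1.
rewrite expgSr permM IH hp /sigk big_ord_recr /= expgD permM -permM -expgSr.
by rewrite permM.
Qed.

Lemma perm_eq_mod (gT : finGroupType) (phi : {perm gT}) a b :
  (forall y, (phi ^+ a) y = (phi ^+ b) y) -> a = b %[mod #[phi]].
Proof. by move=> h; apply/eqP; rewrite -eq_expg_mod_order; apply/eqP/permP. Qed.

Lemma pi1_mod (gT : finGroupType) (phi : {perm gT}) (pi : gT -> nat) :
  phi 1 = 1 -> skew_power phi pi -> pi 1 = 1 %[mod #[phi]].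
Proof.
move=> h1 hp; apply: perm_eq_mod => y.
by rewrite expg1 -[in RHS](mul1g y) hp h1 mul1g.
Qed.

Lemma pi_mul_sig (gT : finGroupType) (phi : {perm gT}) (pi : gT -> nat) :
  skew_power phi pi -> forall x y, pi (x * y) = sigk phi pi y (pi x) %[mod #[phi]].
Proof.
move=> hp x y; apply: perm_eq_mod => z.
have e2 := hp x (y * z); rewrite mulgA (skew_iter hp) mulgA -(hp x y) (hp (x * y) z) in e2.
exact: (mulgI _ _ _ e2).
Qed.

Lemma bigcap_seq_in (T : finType) (r : seq nat) (F : nat -> {set T}) x j :
  x \in \big[@setI T/setT]_(i <- r) F i -> j \in r -> x \in F j.
Proof.
elim: r => [|i r IH] //; rewrite big_cons inE => /andP [h1 h2].
by rewrite inE => /orP [/eqP -> //| /IH]; apply.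
Qed.

Lemma bigcap_all (T : finType) (r : seq nat) (F : nat -> {set T}) x :
  (forall i, x \in F i) -> x \in \big[@setI T/setT]_(i <- r) F i.
Proof.
move=> h; elim: r => [|i r IH]; first by rewrite big_nil inE.
by rewrite big_cons inE h IH.
Qed.

Lemma core_ker (gT : finGroupType) (phi : {perm gT}) (pi : gT -> nat) c i :
  c \in skew_core phi pi -> pi ((phi ^+ i) c) = 1 %[mod #[phi]].
Proof.
move=> hc; set n := #[phi].
have n0 : (0 < n)%N := order_gt0 phi.
have jr : (n - i %% n) \in index_iota 1 n.+1.
  rewrite mem_index_iota ltnS leq_subr andbT subn_gt0 ltn_mod //.
have := bigcap_seq_in hc jr => /imsetP [k]; rewrite inE => hk ->.
rewrite -permM -expgD -expg_mod_order.
have -> : ((n - i %% n + i) %% n = 0)%N.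
  by rewrite -modnDmr subnK ?modnn // ltnW // ltn_mod.
by rewrite expg0 perm1; apply/eqP.
Qed.

Lemma sum_const_mod (f : nat -> nat) a n k :
  (forall i, f i = a %[mod n]) -> (\sum_(i < k) f i) = (k * a)%N %[mod n].
Proof.
move=> h; elim: k => [|k IH]; first by rewrite big_ord0.
by rewrite big_ord_recr /= -modnDm IH h modnDm mulSnr.
Qed.

Lemma smooth_c (gT : finGroupType) (phi : {perm gT}) (pi : gT -> nat) x :
  skew_smooth phi pi -> x^-1 * phi x \in skew_core phi pi.
Proof. by move=> hs; have := hs x; rewrite mem_lcoset. Qed.

Lemma smooth_inv (gT : finGroupType) (phi : {perm gT}) (pi : gT -> nat) :
  skew_power phi pi -> skew_smooth phi pi ->
  forall x, pi (phi x) = pi x %[mod #[phi]].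
Proof.
move=> hp hs x; have hc := smooth_c x hs.
rewrite -{1}(mulKVg x (phi x)) pi_mul_sig // /sigk.
rewrite (@sum_const_mod (fun i => pi ((phi ^+ i) (x^-1 * phi x))) 1) ?muln1 // => i.
exact: core_ker.
Qed.

Lemma smooth_inv_iter (gT : finGroupType) (phi : {perm gT}) (pi : gT -> nat) :
  skew_power phi pi -> skew_smooth phi pi ->
  forall i x, pi ((phi ^+ i) x) = pi x %[mod #[phi]].
Proof.
move=> hp hs; elim=> [|i IH] x; first by rewrite expg0 perm1.
by rewrite expgSr permM smooth_inv.
Qed.

Lemma smooth_sig (gT : finGroupType) (phi : {perm gT}) (pi : gT -> nat) :
  skew_power phi pi -> skew_smooth phi pi ->
  forall x k, sigk phi pi x k = (k * pi x)%N %[mod #[phi]].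
Proof. by move=> hp hs x k; apply: (@sum_const_mod (fun i => pi ((phi ^+ i) x))) => i; apply: smooth_inv_iter. Qed.

Lemma smooth_mul (gT : finGroupType) (phi : {perm gT}) (pi : gT -> nat) :
  skew_power phi pi -> skew_smooth phi pi ->
  forall x y, pi (x * y) = (pi x * pi y)%N %[mod #[phi]].
Proof. by move=> hp hs x y; rewrite pi_mul_sig // smooth_sig // mulnC. Qed.

Lemma mod_dvd a b n d : a = b %[mod n] -> (d %| n)%N -> a = b %[mod d].
Proof. by move=> h dn; rewrite -(modn_dvdm a dn) h modn_dvdm. Qed.

Lemma smooth_of (gT : finGroupType) (psi : {perm gT}) (rho : gT -> nat) :
  rho 1 = 1 %[mod #[psi]] ->
  (forall x y, rho (x * y) = (rho x * rho y)%N %[mod #[psi]]) ->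
  (forall x, rho (psi x) = rho x %[mod #[psi]]) ->
  skew_smooth psi rho.
Proof.
move=> h1 hM hI x; rewrite mem_lcoset; set c := x^-1 * psi x.
set m := #[psi].
have m0 : (0 < m)%N := order_gt0 psi.
have hc : rho c = 1 %[mod m].
  rewrite /c hM -modnMm hI modnMm -hM mulVg //.
have hIt : forall j y, rho ((psi ^+ j) y) = rho y %[mod m].
  by elim=> [|j IH] y; rewrite ?expg0 ?perm1 // expgSr permM hI.
apply: bigcap_all => i.
have -> : c = (psi ^+ i) ((psi ^+ (i * m.-1)) c).
  have e : (i * m.-1 + i = i * m)%N by rewrite -{2}(muln1 i) -mulnDr addn1 prednK.
  rewrite -permM -expgD e.
  by rewrite mulnC expgM expg_order expg1n perm1.
by apply: imset_f; rewrite inE; apply/eqP; rewrite hIt.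
Qed.

Lemma part_i_coprime (gT : finGroupType) (phi : {perm gT}) (pi : gT -> nat) :
  phi 1 = 1 -> skew_power phi pi -> skew_smooth phi pi ->
  forall x, coprime (pi x) #[phi].
Proof.
move=> h1 hp hs x.
have hX : forall k, pi (x ^+ k) = (pi x ^ k)%N %[mod #[phi]].
  elim=> [|k IH]; first by rewrite expg0 expn0 pi1_mod.
  by rewrite expgSr smooth_mul // -modnMm IH modnMm expnSr.
rewrite -(coprime_pexpl _ _ (order_gt0 x)) -coprime_modl -hX expg_order.
by rewrite pi1_mod // coprime_modl coprime1n.
Qed.

Lemma part_iii (gT : finGroupType) (phi : {perm gT}) (pi : gT -> nat) :
  phi 1 = 1 -> skew_power phi pi -> skew_smooth phi pi ->
  forall k, (0 < k)%N -> smooth_skew_morphism (phi ^+ k).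
Proof.
move=> h1 hp hs k _; split.
  by elim: k => [|k IH]; rewrite ?expg0 ?perm1 // expgSr permM IH.
exists pi; split.
  move=> x y; rewrite (skew_iter hp) -expgM; congr (_ * _).
  suff -> : phi ^+ sigk phi pi x k = phi ^+ (k * pi x) by [].
  by apply/eqP; rewrite eq_expg_mod_order smooth_sig.
have dk := orderXdvd phi k.
apply: smooth_of.
- by apply: mod_dvd dk; apply: pi1_mod.
- by move=> x y; apply: mod_dvd dk; apply: smooth_mul.
- by move=> x; apply: mod_dvd dk; apply: smooth_inv_iter.
Qed.

Lemma part_iv (gT : finGroupType) (phi : {perm gT}) (pi : gT -> nat) :
  phi 1 = 1 -> skew_power phi pi -> skew_smooth phi pi ->
  forall gamma : {perm gT}, gamma \in Aut [set: gT] ->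
         smooth_skew_morphism (gamma * phi * gamma^-1).
Proof.
move=> h1 hp hs g gA.
have gM : forall x y, g (x * y) = g x * g y.
  by move=> x y; have /morphicP := Aut_morphic gA; apply; rewrite inE.
have giA : g^-1 \in Aut [set: gT] by rewrite groupV.
have giM : forall x y, g^-1 (x * y) = g^-1 x * g^-1 y.
  by move=> x y; have /morphicP := Aut_morphic giA; apply; rewrite inE.
have g1 : forall h : {perm gT}, (forall x y, h (x * y) = h x * h y) -> h 1 = 1.
  by move=> h hM; apply: (mulgI (h 1)); rewrite -hM !mulg1.
set psi := g * phi * g^-1.
have psiE : forall k x, (psi ^+ k) x = g^-1 ((phi ^+ k) (g x)).
  elim=> [|k IH] x; first by rewrite !expg0 !perm1 -permM mulgV perm1.
  by rewrite expgSr permM IH /psi !permM permKV expgSr permM.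
have opsi : #[psi] = #[phi].
  have -> : psi = phi ^ g^-1 by rewrite conjgE invgK mulgA.
  by rewrite orderJ.
split.
  by rewrite -(expg1 psi) psiE g1 // h1 g1.
exists (fun x => pi (g x)); split.
  by move=> x y; rewrite -(expg1 psi) !psiE gM hp giM expg1.
apply: smooth_of; rewrite opsi.
- by rewrite g1 // pi1_mod.
- by move=> x y; rewrite gM smooth_mul.
- by move=> x; rewrite -(expg1 psi) psiE permKV expg1 smooth_inv.
Qed.

Lemma part_ii (gT : finGroupType) (phi : {perm gT}) (pi : gT -> nat) :
  phi 1 = 1 -> skew_power phi pi -> skew_smooth phi pi ->
  forall N : {group gT}, N <| [set: gT] -> phi @: N = N ->
         exists phibar : {perm coset_of N},
           (forall x : gT, phibar (coset N x) = coset N (phi x)) /\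
           smooth_skew_morphism phibar /\
           ((N : {set gT}) = skew_ker phi pi -> phibar = 1).
Proof.
move=> h1 hp hs N nN stN.
set n := #[phi].
have nx : forall x, x \in 'N(N).
  by move=> x; apply: (subsetP (normal_norm nN)); rewrite inE.
have cM : forall x y, coset N (x * y) = coset N x * coset N y.
  by move=> x y; rewrite coset_morphM ?nx.
have stk : forall k m, m \in N -> (phi ^+ k) m \in N.
  elim=> [|k IH] m mN; rewrite ?expg0 ?perm1 // expgSr permM.
  by rewrite -stN; apply: imset_f; apply: IH.
have wd : forall k x y, coset N x = coset N y ->
    coset N ((phi ^+ k) x) = coset N ((phi ^+ k) y).
  move=> k x y exy.
  have mN : x^-1 * y \in N.
    apply: coset_idr; rewrite ?nx // cM -exy -cM mulVg coset_id //.
  by rewrite -(mulKVg x y) (skew_iter hp) coset_kerr // stk.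
pose f k (C : coset_of N) := coset N ((phi ^+ k) (repr C)).
have fE : forall k x, f k (coset N x) = coset N ((phi ^+ k) x).
  by move=> k x; apply: wd; rewrite coset_reprK.
have fK : cancel (f 1%N) (f n.-1).
  move=> C; rewrite -{1}(coset_reprK C) fE fE -permM -expgD add1n.
  by rewrite prednK ?order_gt0 // expg_order perm1 coset_reprK.
pose pb := perm (can_inj fK).
have pbE : forall x, pb (coset N x) = coset N (phi x).
  by move=> x; rewrite permE fE expg1.
have pbX : forall k x, (pb ^+ k) (coset N x) = coset N ((phi ^+ k) x).
  elim=> [|k IH] x; first by rewrite !expg0 !perm1.
  by rewrite expgSr permM IH pbE expgSr permM.
have dv : (#[pb] %| n)%N.
  rewrite order_dvdn; apply/eqP/permP => C.
  by rewrite -(coset_reprK C) pbX expg_order !perm1.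
have rhoC : forall u u', coset N u = coset N u' -> pi u = pi u' %[mod #[pb]].
  move=> u u' e; apply: perm_eq_mod => Y.
  rewrite -(coset_reprK Y); set y := repr Y.
  apply: (mulgI (coset N (phi u))); rewrite !pbX.
  have e1 : coset N (phi u) = coset N (phi u') by have := wd 1%N u u' e; rewrite !expg1.
  rewrite {2}e1 -!cM -!hp.
  by have := wd 1%N (u * y) (u' * y); rewrite !expg1; apply; rewrite !cM e.
exists pb; split; first exact: pbE.
split; last first.
  move=> eN; apply/permP => C; rewrite -(coset_reprK C) pbE perm1.
  set x := repr C; rewrite -{1}(mulKVg x (phi x)) coset_kerr //.
  rewrite eN inE; apply/eqP.
  by have := core_ker 0 (smooth_c x hs); rewrite expg0 perm1.
split; first by rewrite -(coset_id (group1 N)) pbE h1.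
have rhoE : forall x, pi (repr (coset N x)) = pi x %[mod #[pb]].
  by move=> x; apply: rhoC; rewrite coset_reprK.
exists (fun C : coset_of N => pi (repr C)); split.
  move=> C D.
  have gen : forall x y, pb (coset N x * coset N y) =
      pb (coset N x) * (pb ^+ pi x) (coset N y).
    by move=> x y; rewrite -cM !pbE hp cM pbX.
  by have := gen (repr C) (repr D); rewrite !coset_reprK.
apply: smooth_of.
- rewrite -(coset_id (group1 N)) rhoE; apply: mod_dvd dv.
  exact: pi1_mod.
- move=> C D.
  have gen : forall x y, pi (repr (coset N x * coset N y)) =
      (pi (repr (coset N x)) * pi (repr (coset N y)))%N %[mod #[pb]].
    move=> x y; rewrite -cM rhoE -modnMm !rhoE modnMm.
    by apply: mod_dvd dv; apply: smooth_mul.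
  by have := gen (repr C) (repr D); rewrite !coset_reprK.
- move=> C; rewrite -(coset_reprK C) pbE !rhoE.
  by apply: mod_dvd dv; apply: smooth_inv.
Qed.
Unset Implicit Arguments.
Theorem theorem4 (gT : finGroupType) (phi : {perm gT}) (pi : gT -> nat) :
  phi 1 = 1 -> skew_power phi pi -> skew_smooth phi pi ->
  (* (i) pi is a homomorphism A -> Z_n^* with kernel Ker phi *)
  [/\ (forall x : gT, coprime (pi x) #[phi]),
      (forall x y : gT, pi (x * y) = (pi x * pi y)%N %[mod #[phi]]) &
      [set x : gT | pi x == 1 %[mod #[phi]]] = skew_ker phi pi] /\
  (* (ii) induced skew-morphisms on quotients by invariant normal subgroups *)
  [/\ (forall N : {group gT}, N <| [set: gT] -> phi @: N = N ->
         exists phibar : {perm coset_of N},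
           (forall x : gT, phibar (coset N x) = coset N (phi x)) /\
           smooth_skew_morphism phibar /\
           ((N : {set gT}) = skew_ker phi pi -> phibar = 1)),
  (* (iii) powers *)
      (forall k : nat, (0 < k)%N -> smooth_skew_morphism (phi ^+ k)) &
  (* (iv) conjugates by automorphisms: x |-> gamma^-1 (phi (gamma x)) *)
      (forall gamma : {perm gT}, gamma \in Aut [set: gT] ->
         smooth_skew_morphism (gamma * phi * gamma^-1))].
Proof.
move=> h1 hp hs; split.
  split; [exact: part_i_coprime | exact: smooth_mul | by []].
split; [exact: part_ii | exact: part_iii | exact: part_iv].
Qed.
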